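(* For every graph $G$ and every integer $\ell\ge 0$, a set $B\subseteq V(G)$ is an $\ell$-leaky forcing set of $G$ if and only if it is an $\ell$-edge-leaky forcing set of $G$. In particular $\operatorname{Z}_{(\ell)}(G)=\operatorname{Z}'_{(\ell)}(G)$.
   Context: All graphs are finite, simple and undirected. Zero forcing: a blue vertex $u$ with exactly one white neighbor $w$ may force $w$ (color it blue), written $u\to w$. A vertex leak is a vertex not allowed to perform any force; $B$ is an $\ell$-leaky forcing set if for every set of at most $\ell$ vertex leaks, exhaustively applying the forcing rule from initial blue set $B$ (leaks never forcing) colors all of $V(G)$ blue. An edge leak is an edge $xy$ across which no force may be performed (neither $x\to y$ nor $y\to x$); $B$ is an $\ell$-edge-leaky forcing set if for every set of at most $\ell$ edge leaks, $B$ colors all of $V(G)$ blue without forcing across leak edges. $\operatorname{Z}_{(\ell)}(G)$ and $\operatorname{Z}'_{(\ell)}(G)$ are the minimum sizes of an $\ell$-leaky forcing set and of an $\ell$-edge-leaky forcing set, respectively. *)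

(* Defs.v *)
(* A simple graph: finite vertex type T with a symmetric,
   irreflexive adjacency relation e. *)
From mathcomp Require Import all_boot.
Set Implicit Arguments. Unset Strict Implicit. Unset Printing Implicit Defensive.

Section Forcing.
Variables (T : finType) (e : rel T).

Definition force_step (ok : T -> T -> bool) (S S' : {set T}) : bool :=
  [exists u : T, exists w : T,
     [&& u \in S, e u w, w \notin S, ok u w,
         [forall x : T, (e u x && (x != w)) ==> (x \in S)] &
         S' == w |: S]].

Definition forces_all (ok : T -> T -> bool) (B : {set T}) : bool :=
  [forall S : {set T}, connect (force_step ok) B S ==>
    (~~ [exists S' : {set T}, force_step ok S S']) ==> (S == setT)].

(* Vertex leaks: leaks never force. *)
Definition leaky_forcing_set (l : nat) (B : {set T}) : bool :=
  [forall L : {set T}, (#|L| <= l) ==> forces_all (fun u _ => u \notin L) B].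

Definition edge_set_of (L : {set {set T}}) : bool :=
  [forall X in L, exists x : T, exists y : T, e x y && (X == [set x; y])].

Definition edge_leaky_forcing_set (l : nat) (B : {set T}) : bool :=
  [forall L : {set {set T}}, edge_set_of L ==> (#|L| <= l) ==>
    forces_all (fun u w => [set u; w] \notin L) B].

(* Minimum sizes (V(G) itself is always such a set, so #|T| is a valid
   default for the minimum). *)
Definition Z_leaky (l : nat) : nat :=
  \big[minn/#|T|]_(B : {set T} | leaky_forcing_set l B) #|B|.
Definition Z_edge_leaky (l : nat) : nat :=
  \big[minn/#|T|]_(B : {set T} | edge_leaky_forcing_set l B) #|B|.

End Forcing.

(* Main.v *)
Require Import Defs.
From mathcomp Require Import all_boot.
Set Implicit Arguments. Unset Strict Implicit. Unset Printing Implicit Defensive.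

Section Proof.
Variables (T : finType) (e : rel T).

Definition uw (S : {set T}) u w :=
  [&& u \in S, e u w, w \notin S & [forall x : T, (e u x && (x != w)) ==> (x \in S)]].

Lemma uw_uniq (S : {set T}) u w w' : uw S u w -> uw S u w' -> w = w'.
Proof.
case/and4P=> _ euw wS /forallP H; case/and4P=> _ euw' w'S _.
case: (eqVneq w w') => // nw.
by move: (H w'); rewrite euw' eq_sym nw /= (negbTE w'S).
Qed.

Lemma force_stepP (ok : T -> T -> bool) S S' :
  reflect (exists u w, [/\ uw S u w, ok u w & S' = w |: S]) (force_step e ok S S').
Proof.
rewrite /force_step; apply: (iffP existsP) => [[u /existsP[w H]]|[u [w [Huw okuw ->]]]].
- case/and5P: H => uS euw wS okuw /andP[Hx /eqP ->].
  by exists u, w; split => //; apply/and4P; split.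
- exists u; apply/existsP; exists w; case/and4P: Huw => uS euw wS Hx.
  by rewrite uS euw wS okuw Hx eqxx.
Qed.

Lemma reach_ind (ok : T -> T -> bool) (P : {set T} -> Prop) B C :
  P B -> (forall C C', P C -> force_step e ok C C' -> P C') ->
  connect (force_step e ok) B C -> P C.
Proof.
move=> PB H /connectP [p pth ->] {C}.
elim: p B PB pth => [|c p IH] B PB //= /andP [st pth].
exact: IH (H _ _ PB st) pth.
Qed.

Definition stalled (ok : T -> T -> bool) S := forall u w, uw S u w -> ~~ ok u w.

Lemma noforce (ok : T -> T -> bool) S : stalled ok S <-> ~~ [exists S', force_step e ok S S'].
Proof.
split=> [H|H u w Huw].
- apply/existsP => [[S' /force_stepP [u [w [Huw okuw _]]]]].
  by move: (H u w Huw); rewrite okuw.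
- apply/negP => okuw; apply: (negP H); apply/existsP; exists (w |: S).
  by apply/force_stepP; exists u, w.
Qed.

Lemma reach_sub (ok : T -> T -> bool) (B S C : {set T}) : B \subset S -> stalled ok S ->
  connect (force_step e ok) B C -> C \subset S.
Proof.
move=> BS st; apply: (@reach_ind ok (fun C => C \subset S)) => // C0 C' C0S /force_stepP [u [w [Huw okuw ->]]].
rewrite subUset C0S andbT sub1set.
apply/negPn/negP => wS.
case/and4P: Huw => uC euw wC /forallP Hx.
have : uw S u w.
  apply/and4P; split => //; first exact: (subsetP C0S).
  apply/forallP => x; apply/implyP => /(implyP (Hx x)); exact: (subsetP C0S).
by move/st; rewrite okuw.
Qed.

Lemma reach_mono (ok : T -> T -> bool) (B C : {set T}) : connect (force_step e ok) B C -> B \subset C.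
Proof.
apply: (@reach_ind ok (fun C => B \subset C)) => // C0 C' BC0 /force_stepP [u [w [_ _ ->]]].
exact: subset_trans BC0 (subsetU1 _ _).
Qed.

Lemma exists_terminal (ok : T -> T -> bool) (B : {set T}) : exists C, connect (force_step e ok) B C /\ stalled ok C.
Proof.
have [C BC Cmax] := @arg_maxnP _ B (connect (force_step e ok) B) (fun C => #|C|) (connect0 _ _).
exists C; split => // u w Huw; apply/negP => okuw.
have st : force_step e ok C (w |: C) by apply/force_stepP; exists u, w.
have := Cmax _ (connect_trans BC (connect1 st)).
case/and4P: Huw => _ _ wC _.
by rewrite cardsU1 wC /= add1n ltnn.
Qed.

Lemma fail_char (ok : T -> T -> bool) (B : {set T}) : forces_all e ok B = false <->
  exists S : {set T}, [/\ B \subset S, stalled ok S & S != setT].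
Proof.
split.
- move/negbT/forallPn => [S]; rewrite negb_imply => /andP[BS].
  rewrite negb_imply => /andP[nf nT].
  exists S; split => //; [exact: reach_mono BS | exact: (noforce ok S).2].
- move=> [S [BS st nT]]; apply/negbTE/forallPn.
  have [C [BC stC]] := exists_terminal ok B.
  exists C; rewrite negb_imply BC /= negb_imply; apply/andP; split; first exact: (noforce ok C).1.
  apply: contra nT => /eqP CT; rewrite eqEsubset subsetT /= -CT.
  exact: reach_sub BS st BC.
Qed.

Lemma leaky_edge l B : leaky_forcing_set e l B -> edge_leaky_forcing_set e l B.
Proof.
move=> /forallP HL; apply/forallP => E; apply/implyP => Eset; apply/implyP => cardE.
apply/negPn/negP => /negbTE /fail_char [S [BS st nT]].
pose P u w := uw S u w && ([set u; w] \in E).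
pose L := [set u | [exists w, P u w]].
pose wof u := odflt u [pick w | P u w].
have wofP u : u \in L -> P u (wof u).
  rewrite inE => /existsP [w Pw]; rewrite /wof; case: pickP => [w' //|/(_ w)].
  by rewrite /= Pw.
pose f u := [set u; wof u].
have finj : {in L &, injective f}.
  move=> u v uL vL fuv.
  have /andP[/and4P[uS _ wuS _] _] := wofP u uL.
  have /andP[/and4P[vS _ wvS _] _] := wofP v vL.
  have : u \in f v by rewrite -fuv !inE eqxx.
  rewrite !inE => /orP[/eqP //| /eqP uw'].
  by move: wvS; rewrite -uw' uS.
have cardL : #|L| <= l.
  rewrite -(card_in_imset finj); apply: leq_trans cardE; apply: subset_leq_card.
  apply/subsetP => X /imsetP [u uL ->]. by case/andP: (wofP u uL).
have := HL L; rewrite cardL /=.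
suff -> : forces_all e (fun u _ => u \notin L) B = false by [].
apply/fail_char; exists S; split => // u w Huw /=; rewrite negbK inE.
apply/existsP; exists w; rewrite /P Huw /=.
by move: (st u w Huw); rewrite /= negbK.
Qed.

Lemma edge_leaky l B : edge_leaky_forcing_set e l B -> leaky_forcing_set e l B.
Proof.
move=> /forallP HE; apply/forallP => L; apply/implyP => cardL.
apply/negPn/negP => /negbTE /fail_char [S [BS st nT]].
pose L' := [set u in L | [exists w, uw S u w]].
pose wof u := odflt u [pick w | uw S u w].
have wofP u : u \in L' -> uw S u (wof u).
  rewrite inE => /andP[_ /existsP [w Pw]]; rewrite /wof; case: pickP => [w' //|/(_ w)].
  by rewrite /= Pw.
pose E := [set [set u; wof u] | u in L'].
have Eset : edge_set_of e E.
  apply/forallP => X; apply/implyP => /imsetP [u uL' ->].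
  apply/existsP; exists u; apply/existsP; exists (wof u).
  by case/and4P: (wofP u uL') => _ -> _ _; rewrite eqxx.
have cardE : #|E| <= l.
  apply: leq_trans (leq_imset_card _ _) _; apply: leq_trans cardL.
  by apply: subset_leq_card; apply/subsetP => u; rewrite inE => /andP[].
have := HE E; rewrite Eset cardE /=.
suff -> : forces_all e (fun u w => [set u; w] \notin E) B = false by [].
apply/fail_char; exists S; split => // u w Huw /=; rewrite negbK.
have uL : u \in L by move: (st u w Huw); rewrite /= negbK.
have uL' : u \in L' by rewrite inE uL; apply/existsP; exists w.
rewrite (uw_uniq Huw (wofP u uL')).
by apply: imset_f.
Qed.

End Proof.

Theorem corollary2p4 (T : finType) (e : rel T)
  (e_sym : symmetric e) (e_irr : irreflexive e) (l : nat) :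
  (forall B : {set T}, leaky_forcing_set e l B <-> edge_leaky_forcing_set e l B)
  /\ Z_leaky e l = Z_edge_leaky e l.
Proof.
split => [B|]; first by split; [apply: leaky_edge|apply: edge_leaky].
rewrite /Z_leaky /Z_edge_leaky; apply: eq_bigl => B.
by apply/idP/idP; [apply: leaky_edge|apply: edge_leaky].
Qed.
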